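(* Let $\Theta$ be a non-empty finite set, let $\mathcal{S}$ be a measurable subset of $\Delta(\Theta)$, and fix an interview cost $c>0$. Let $\pi,\pi'\in\Delta(\mathcal{S})$ be two populations with the same skill distribution, i.e. $p_\pi=p_{\pi'}$. Then: (a) There is systematic ex-ante discrimination against $\pi$ if and only if $\pi' \mathrel{M} \pi$ and $\pi\neq\pi'$. (b) There is unsystematic ex-ante discrimination if and only if neither $\pi \mathrel{M} \pi'$ nor $\pi' \mathrel{M} \pi$ holds. (c) There is no ex-ante discrimination if and only if $\pi=\pi'$.
   Context: $\Delta(\Theta)$ denotes the set of probability distributions on $\Theta$ (with its Borel $\sigma$-algebra). A population is a probability measure $\pi\in\Delta(\mathcal{S})$; its skill distribution is $p_\pi(\theta)=\int_{\mathcal{S}} s(\theta)\,\pi(\mathrm{d}s)$ for $\theta\in\Theta$. For a non-empty finite $A\subset\mathbb{R}^\Theta$, $v_A(s)=\max_{a\in A}\sum_{\theta\in\Theta}a(\theta)s(\theta)$. A firm is a pair $(A,\alpha)$ with $A$ a non-empty finite subset of $\mathbb{R}^\Theta$ and $0<\alpha\le 1$. Firm $(A,\alpha)$ excludes population $\pi$ if $\alpha\int_{\mathcal{S}}\max\{v_A,0\}\,\mathrm{d}\pi\le c$ (and interviews $\pi$ otherwise). For $\pi,\pi'$ with $p_\pi=p_{\pi'}$: there is systematic ex-ante discrimination against $\pi$ if every firm that excludes $\pi'$ also excludes $\pi$, and some firm excludes $\pi$ but not $\pi'$. There is unsystematic ex-ante discrimination if there is a firm that excludes $\pi$ but not $\pi'$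 and a firm that excludes $\pi'$ but not $\pi$. There is no ex-ante discrimination if there is neither systematic ex-ante discrimination (against $\pi$ or against $\pi'$) nor unsystematic ex-ante discrimination. $\pi' \mathrel{M} \pi$ means $\int_{\mathcal{S}} h\,\mathrm{d}\pi'\ge\int_{\mathcal{S}} h\,\mathrm{d}\pi$ for every convex continuous $h:\Delta(\Theta)\to\mathbb{R}$. *)

(* Defs.v *)
From HB Require Import structures.
From mathcomp Require Import all_boot all_order all_algebra.
From mathcomp Require Import all_classical all_reals.
From mathcomp Require Import ereal topology normedtype sequences measure
  lebesgue_measure lebesgue_integral probability.
Set Implicit Arguments. Unset Strict Implicit. Unset Printing Implicit Defensive.
Import Order.TTheory GRing.Theory Num.Theory.
Local Open Scope classical_set_scope.
Local Open Scope ring_scope.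

(* The finite type of skills Theta is represented by 'I_n (n > 0 in the
   theorem); a vector in R^Theta is an n.-tuple R, with the product
   (= Borel, since Theta is finite) sigma-algebra of the library. *)

Section Defs.
Variables (R : realType) (n : nat).

Definition vec := (n.-tuple R).

Definition simplex : set vec :=
  [set s | (forall i, 0 <= tnth s i) /\ \sum_(i < n) tnth s i = 1].

Definition dotv (a s : vec) : R := \sum_(i < n) tnth a i * tnth s i.

Definition vA (A : seq vec) (s : vec) : R :=
  match A with
  | [::] => 0
  | a0 :: A' => \big[Num.max/dotv a0 s]_(a <- A') dotv a s
  end.

Definition is_firm (A : seq vec) (alpha : R) : Prop :=
  A <> [::] /\ 0 < alpha <= 1.

Variable (S : set vec).

Definition skill (pi : probability vec R) (i : 'I_n) : \bar R :=
  (\int[pi]_(s in S) (tnth s i)%:E)%E.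

Definition excludes (c : R) (A : seq vec) (alpha : R)
  (pi : probability vec R) : Prop :=
  (alpha%:E * \int[pi]_(s in S) (Num.max (vA A s) 0)%:E <= c%:E)%E.

Definition sys_disc (c : R) (pi pi' : probability vec R) : Prop :=
  (forall A alpha, is_firm A alpha ->
     excludes c A alpha pi' -> excludes c A alpha pi) /\
  (exists A alpha, is_firm A alpha /\
     excludes c A alpha pi /\ ~ excludes c A alpha pi').

Definition unsys_disc (c : R) (pi pi' : probability vec R) : Prop :=
  (exists A alpha, is_firm A alpha /\
     excludes c A alpha pi /\ ~ excludes c A alpha pi') /\
  (exists A alpha, is_firm A alpha /\
     excludes c A alpha pi' /\ ~ excludes c A alpha pi).

Definition no_disc (c : R) (pi pi' : probability vec R) : Prop :=
  ~ sys_disc c pi pi' /\ ~ sys_disc c pi' pi /\ ~ unsys_disc c pi pi'.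

Definition convex_on_simplex (h : vec -> R) : Prop :=
  forall x y t, simplex x -> simplex y -> 0 <= t <= 1 ->
    h [tuple t * tnth x i + (1 - t) * tnth y i | i < n]
    <= t * h x + (1 - t) * h y.

(* continuity of h on Delta(Theta) (subspace of R^Theta, whose product
   topology is induced by the sup-distance) *)
Definition continuous_on_simplex (h : vec -> R) : Prop :=
  forall x, simplex x -> forall e : R, 0 < e -> exists2 d : R, 0 < d &
    forall y, simplex y -> (forall i, `|tnth y i - tnth x i| < d) ->
      `|h y - h x| < e.

Definition Mrel (pi' pi : probability vec R) : Prop :=
  forall h : vec -> R, convex_on_simplex h -> continuous_on_simplex h ->
    (\int[pi]_(s in S) (h s)%:E <= \int[pi']_(s in S) (h s)%:E)%E.

End Defs.

(* Main.v *)
Require Import Defs.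
From HB Require Import structures.
From mathcomp Require Import all_boot all_order all_algebra.
From mathcomp Require Import all_classical all_reals.
From mathcomp Require Import ereal topology normedtype sequences measure
  lebesgue_measure lebesgue_integral probability.
From mathcomp Require Import ring lra measurable_realfun numfun derive.
Import Order.TTheory GRing.Theory Num.Theory.
Local Open Scope classical_set_scope.
Local Open Scope ring_scope.

Set Implicit Arguments. Unset Strict Implicit. Unset Printing Implicit Defensive.

Section VecAlg.
Variables (R : realType) (n : nat).
Local Notation vec := (vec R n).

Definition vone : vec := [tuple (1:R) | i < n].
Definition vzero : vec := [tuple (0:R) | i < n].
Definition vadd (a b : vec) : vec := [tuple tnth a i + tnth b i | i < n].
Definition vscale (k : R) (a : vec) : vec := [tuple k * tnth a i | i < n].
Definition ve (j : 'I_n) : vec := [tuple (i == j)%:R | i < n].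
Definition comb (t : R) (x y : vec) : vec :=
  [tuple t * tnth x i + (1 - t) * tnth y i | i < n].

Lemma dotvD a b s : dotv (vadd a b) s = dotv a s + dotv b s.
Proof.
rewrite /dotv -big_split /=; apply: eq_bigr => i _.
by rewrite tnth_mktuple mulrDl.
Qed.

Lemma dotvZ k a s : dotv (vscale k a) s = k * dotv a s.
Proof.
rewrite /dotv mulr_sumr; apply: eq_bigr => i _.
by rewrite tnth_mktuple mulrA.
Qed.

Lemma dotv0 s : dotv vzero s = 0.
Proof. by rewrite /dotv big1 // => i _; rewrite tnth_mktuple mul0r. Qed.

Lemma dotv_one s : simplex s -> dotv vone s = 1.
Proof.
move=> [_ <-]; rewrite /dotv; apply: eq_bigr => i _.
by rewrite tnth_mktuple mul1r.
Qed.

Lemma dotv_e j s : dotv (ve j) s = tnth s j.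
Proof.
rewrite /dotv (bigD1 j) //= tnth_mktuple eqxx mul1r big1 ?addr0 //.
by move=> i /negbTE ij; rewrite tnth_mktuple ij mul0r.
Qed.

Lemma dotv_comb a t x y :
  dotv a (comb t x y) = t * dotv a x + (1 - t) * dotv a y.
Proof.
rewrite /dotv !mulr_sumr -big_split /=; apply: eq_bigr => i _.
rewrite tnth_mktuple; ring.
Qed.

Lemma simplex_comb t x y : simplex x -> simplex y -> 0 <= t <= 1 ->
  simplex (comb t x y).
Proof.
move=> [x0 x1] [y0 y1] /andP[t0 t1]; split.
  move=> i; rewrite tnth_mktuple addr_ge0 // mulr_ge0 //.
  by rewrite subr_ge0.
under eq_bigr do rewrite tnth_mktuple.
by rewrite big_split /= -!mulr_sumr x1 y1 !mulr1 addrC subrK.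
Qed.

Lemma maxrl (x y : R) : y <= x -> Num.max x y = x.
Proof. by move=> yx; apply/le_anti; rewrite ge_max lexx yx le_max lexx. Qed.
Lemma maxrr (x y : R) : x <= y -> Num.max x y = y.
Proof. by move=> yx; apply/le_anti; rewrite ge_max lexx yx le_max lexx orbT. Qed.

Lemma bigmax_seq_ge (x0 : R) (l : seq vec) (F : vec -> R) :
  x0 <= \big[Num.max/x0]_(a <- l) F a.
Proof.
elim: l => [|b l IH]; first by rewrite big_nil.
by rewrite big_cons le_max IH orbT.
Qed.

Lemma bigmax_seq_geF (x0 : R) (l : seq vec) (F : vec -> R) a :
  a \in l -> F a <= \big[Num.max/x0]_(a <- l) F a.
Proof.
elim: l => [//|b l IH]; rewrite inE big_cons le_max => /orP[/eqP->|al].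
  by rewrite lexx.
by rewrite IH // orbT.
Qed.

Lemma bigmax_seq_le (x0 M : R) (l : seq vec) (F : vec -> R) :
  x0 <= M -> (forall a, a \in l -> F a <= M) ->
  \big[Num.max/x0]_(a <- l) F a <= M.
Proof.
move=> x0M; elim: l => [|b l IH] H; first by rewrite big_nil.
rewrite big_cons ge_max H ?mem_head //= IH // => a al.
by apply: H; rewrite inE al orbT.
Qed.

Lemma vA_ge (A : seq vec) s a : a \in A -> dotv a s <= vA A s.
Proof.
case: A => [//|a0 A']; rewrite inE /= => /orP[/eqP->|aA].
  exact: (bigmax_seq_ge _ _ (fun a => dotv a s)).
exact: (bigmax_seq_geF _ (fun a => dotv a s)).
Qed.

Lemma vA_le (A : seq vec) s M : A != [::] -> (forall a, a \in A -> dotv a s <= M) ->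
  vA A s <= M.
Proof.
case: A => [//|a0 A'] _ H /=.
apply: bigmax_seq_le; first by apply: H; rewrite mem_head.
by move=> a aA; apply: H; rewrite inE aA orbT.
Qed.

Lemma vA_ex (A : seq vec) s : A != [::] -> exists2 a, a \in A & vA A s = dotv a s.
Proof.
case: A => [//|a0 A'] _ /=.
elim: A' => [|b l [a al E]]; first by exists a0; rewrite ?mem_head ?big_nil.
rewrite big_cons E; case: (leP (dotv b s) (dotv a s)) => ba.
  by exists a => //; move: al; rewrite !inE => /orP[->|->]; rewrite ?orbT.
by exists b => //; rewrite !inE eqxx orbT.
Qed.

End VecAlg.

Set Implicit Arguments. Unset Strict Implicit. Unset Printing Implicit Defensive.

Section Integ.
Variables (R : realType) (n : nat) (S : set (vec R n)).
Hypothesis mS : measurable S.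
Local Notation vec := (vec R n).

Definition good (f : vec -> R) :=
  measurable_fun S f /\ exists M, forall s, S s -> `|f s| <= M.

Variable mu : probability vec R.
Hypothesis muS : mu S = 1%E.

Let muS' : ((mu : measure vec R) S = 1)%E. Proof. exact: muS. Qed.

Definition Ei (f : vec -> R) : R := fine (\int[mu]_(s in S) (f s)%:E)%E.

Lemma good_int f : good f -> mu.-integrable S (EFin \o f).
Proof.
move=> [mf [M hM]]; apply: measurable_bounded_integrable => //.
  by rewrite muS' ltry.
exists M; split; first exact: num_real.
by move=> x Mx s Ss /=; exact: le_trans (hM _ Ss) (ltW Mx).
Qed.

Lemma E_fin f : good f -> (\int[mu]_(s in S) (f s)%:E)%E = (Ei f)%:E.
Proof.
move=> gf; rewrite /Ei fineK //.
exact: (integrable_fin_num mS (good_int gf)).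
Qed.

Lemma goodD f g : good f -> good g -> good (fun s => f s + g s).
Proof.
move=> [mf [M hM]] [mg [N hN]]; split; first exact: measurable_funD.
exists (M + N) => s Ss; apply: le_trans (ler_normD _ _) _.
by apply: lerD; [exact: hM|exact: hN].
Qed.

Lemma goodZ k f : good f -> good (fun s => k * f s).
Proof.
move=> [mf [M hM]]; split.
  by apply: measurable_funM => //; exact: measurable_cst.
exists (`|k| * M) => s Ss; rewrite normrM ler_wpM2l //; exact: hM.
Qed.

Lemma goodC k : good (fun _ => k).
Proof. by split; [exact: measurable_cst|exists `|k|]. Qed.

Lemma goodN f : good f -> good (fun s => - f s).
Proof.
move=> gf; have := goodZ (-1) gf; congr good.
by apply: funext => s; rewrite mulN1r.
Qed.

Lemma goodB f g : good f -> good g -> good (fun s => f s - g s).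
Proof. by move=> gf gg; apply: goodD => //; exact: goodN. Qed.

Lemma goodM f g : good f -> good (fun s => Num.max (f s) (g s)) -> good g ->
  good (fun s => Num.max (f s) (g s)).
Proof. by []. Qed.

Lemma goodmax f g : good f -> good g -> good (fun s => Num.max (f s) (g s)).
Proof.
move=> [mf [M hM]] [mg [N hN]]; split; first exact: measurable_maxr.
exists (M + N) => s Ss.
have f0 := hM _ Ss; have g0 := hN _ Ss.
have M0 : 0 <= M by apply: le_trans f0.
have N0 : 0 <= N by apply: le_trans g0.
case: (leP (f s) (g s)) => _.
  by apply: le_trans g0 _; rewrite lerDr.
by apply: le_trans f0 _; rewrite lerDl.
Qed.

Lemma Ei_ext f g : (forall s, S s -> f s = g s) -> Ei f = Ei g.
Proof.
move=> fg; rewrite /Ei; congr fine; apply: eq_integral => s.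
by rewrite inE => Ss; rewrite fg.
Qed.

Lemma EiD f g : good f -> good g -> Ei (fun s => f s + g s) = Ei f + Ei g.
Proof.
move=> gf gg; apply: EFin_inj; rewrite -E_fin; last exact: goodD.
rewrite EFinD -!E_fin //.
under eq_integral do rewrite EFinD.
by rewrite integralD //; exact: good_int.
Qed.

Lemma EiZ k f : good f -> Ei (fun s => k * f s) = k * Ei f.
Proof.
move=> gf; apply: EFin_inj; rewrite -E_fin; last exact: goodZ.
rewrite EFinM -!E_fin //.
under eq_integral do rewrite EFinM.
by rewrite integralZl //; exact: good_int.
Qed.

Lemma EiC k : Ei (fun _ => k) = k.
Proof.
rewrite /Ei (_ : (fun s => _) = cst k%:E) //.
by rewrite integral_cst // muS' mule1.
Qed.

Lemma EiB f g : good f -> good g -> Ei (fun s => f s - g s) = Ei f - Ei g.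
Proof.
move=> gf gg; rewrite EiD //; last exact: goodN.
rewrite (_ : (fun s => - g s) = (fun s => -1 * g s)); last first.
  by apply: funext => s; rewrite mulN1r.
by rewrite EiZ // mulN1r.
Qed.

Lemma Ei_le f g : good f -> good g -> (forall s, S s -> f s <= g s) ->
  Ei f <= Ei g.
Proof.
move=> gf gg fg; rewrite -lee_fin -!E_fin //.
apply: le_integral => //; try exact: good_int.
by move=> s; rewrite inE => Ss /=; rewrite lee_fin fg.
Qed.

End Integ.

Set Implicit Arguments. Unset Strict Implicit. Unset Printing Implicit Defensive.

Section Goods.
Variables (R : realType) (n : nat) (S : set (vec R n)).
Hypothesis mS : measurable S.
Hypothesis sS : S `<=` simplex (n:=n).
Local Notation vec := (vec R n).

Definition fA (A : seq vec) (s : vec) : R := Num.max (vA A s) 0.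
Definition nrm (a : vec) : R := \sum_(i < n) `|tnth a i|.

Lemma simplex_le1 (s : vec) i : simplex s -> 0 <= tnth s i <= 1.
Proof.
move=> [s0 s1]; rewrite s0 /=; rewrite -s1 (bigD1 i) //= lerDl.
by apply: sumr_ge0 => j _; exact: s0.
Qed.

Lemma dotv_bound (a s : vec) : simplex s -> `|dotv a s| <= nrm a.
Proof.
move=> ss; rewrite /dotv /nrm; apply: le_trans (ler_norm_sum _ _ _) _.
apply: ler_sum => i _; rewrite normrM.
have /andP[s0 s1] := simplex_le1 i ss.
by rewrite -[leRHS]mulr1 ler_wpM2l // ger0_norm.
Qed.

Lemma measurable_dotv (a : vec) : measurable_fun S (dotv a).
Proof.
rewrite /dotv; apply: measurable_sum => i.
apply: measurable_funM; first exact: measurable_cst.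
apply: measurable_funS (measurable_tnth i) => //.
Qed.

Lemma good_dotv (a : vec) : good S (dotv a).
Proof.
split; first exact: measurable_dotv.
by exists (nrm a) => s /sS ss; exact: dotv_bound.
Qed.

Definition bndA (A : seq vec) : R := \big[Num.max/0]_(a <- A) nrm a.

Lemma vA_bound (A : seq vec) s : A != [::] -> simplex s -> `|vA A s| <= bndA A.
Proof.
move=> A0 ss; have [a aA ->] := vA_ex s A0.
apply: le_trans (dotv_bound a ss) _.
exact: (bigmax_seq_geF _ (fun a => nrm a)).
Qed.

Lemma measurable_bigmax (a0 : vec) l :
  measurable_fun S (fun s => \big[Num.max/dotv a0 s]_(a <- l) dotv a s).
Proof.
elim: l => [|b l IH].
  rewrite (_ : (fun s => _) = dotv a0); first exact: measurable_dotv.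
  by apply: funext => s; rewrite big_nil.
rewrite (_ : (fun s => _) = (dotv b) \max
   (fun s => \big[Num.max/dotv a0 s]_(a <- l) dotv a s)).
  exact: measurable_maxr (measurable_dotv b) IH.
by apply: funext => s; rewrite big_cons.
Qed.

Lemma measurable_vA (A : seq vec) : measurable_fun S (vA A).
Proof.
case: A => [|a0 A]; first exact: measurable_cst.
exact: measurable_bigmax.
Qed.

Lemma good_vA (A : seq vec) : A != [::] -> good S (vA A).
Proof.
move=> A0; split; first exact: measurable_vA.
by exists (bndA A) => s /sS ss; exact: vA_bound.
Qed.

Lemma good_fA (A : seq vec) : A != [::] -> good S (fA A).
Proof. by move=> A0; apply: goodmax; [exact: good_vA|exact: goodC]. Qed.

Lemma fA_ge0 (A : seq vec) s : 0 <= fA A s.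
Proof. by rewrite /fA le_max lexx orbT. Qed.

End Goods.

Set Implicit Arguments. Unset Strict Implicit. Unset Printing Implicit Defensive.

Lemma max0_lip (R : realType) (a b : R) :
  `|Num.max a 0 - Num.max b 0| <= `|a - b|.
Proof.
case: (leP a 0) => ha; case: (leP b 0) => hb.
- by rewrite subrr normr0.
- rewrite sub0r normrN gtr0_norm // ler_normr; apply/orP; right; lra.
- rewrite subr0 gtr0_norm // ler_normr; apply/orP; left; lra.
- by [].
Qed.

Section Firms.
Variables (R : realType) (n : nat) (S : set (vec R n)).
Hypothesis mS : measurable S.
Hypothesis sS : S `<=` simplex (n:=n).
Local Notation vec := (vec R n).
Variable c : R.
Hypothesis c0 : 0 < c.

Definition eA (mu : probability vec R) (A : seq vec) := Ei S mu (fA A).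

Definition LE (mu1 mu2 : probability vec R) :=
  forall A : seq vec, A != [::] -> eA mu1 A <= eA mu2 A.

Section OneMu.
Variable mu : probability vec R.
Hypothesis muS : mu S = 1%E.

Lemma eA_ge0 A : A != [::] -> 0 <= eA mu A.
Proof.
move=> A0; rewrite -(EiC mS muS 0) /eA; apply: (Ei_le mS muS).
- exact: goodC.
- exact: good_fA.
- by move=> s _; exact: fA_ge0.
Qed.

Lemma excludesE A alpha : A != [::] ->
  excludes S c A alpha mu <-> alpha * eA mu A <= c.
Proof.
move=> A0; rewrite /excludes.
have := E_fin mS muS (good_fA sS A0); rewrite /fA => ->.
by rewrite -EFinM lee_fin.
Qed.

Lemma vA_scale k (A : seq vec) s : 0 < k -> A != [::] ->
  vA (map (vscale k) A) s = k * vA A s.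
Proof.
move=> k0 A0; have mA0 : map (vscale k) A != [::] by case: A A0.
apply/le_anti/andP; split.
  apply: vA_le => // b /mapP[a aA ->]; rewrite dotvZ.
  by apply: ler_wpM2l; [exact: ltW | exact: vA_ge].
have [a aA ->] := vA_ex s A0; rewrite -dotvZ; apply: vA_ge.
by apply/mapP; exists a.
Qed.

Lemma eA_scale k (A : seq vec) : 0 < k -> A != [::] ->
  eA mu (map (vscale k) A) = k * eA mu A.
Proof.
move=> k0 A0; rewrite /eA -(EiZ mS muS); last exact: good_fA.
apply: Ei_ext => s _; rewrite /fA vA_scale //.
case: (leP (vA A s) 0) => h.
  by rewrite maxrr ?mulr0 // pmulr_rle0.
by rewrite maxrl // pmulr_rge0 // ltW.
Qed.

End OneMu.

Variables pi1 pi2 : probability vec R.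
Hypothesis pi1S : pi1 S = 1%E.
Hypothesis pi2S : pi2 S = 1%E.

Lemma X1 : (exists A alpha, is_firm A alpha /\
     excludes S c A alpha pi1 /\ ~ excludes S c A alpha pi2) <->
   (exists A, A != [::] /\ eA pi1 A < eA pi2 A).
Proof.
split.
  move=> [A [alpha [[/eqP A0 /andP[a0 a1]] [e1 e2]]]].
  move: e1 e2; rewrite !excludesE // => e1 /negP; rewrite -ltNge => e2.
  exists A; split => //; rewrite -(ltr_pM2l a0); exact: le_lt_trans e1 e2.
move=> [A [A0 lt12]].
have e10 := eA_ge0 pi1S A0.
have e20 : 0 < eA pi2 A by exact: le_lt_trans e10 lt12.
set l := 2 * c / (eA pi1 A + eA pi2 A).
have s0 : 0 < eA pi1 A + eA pi2 A by exact: ltr_wpDl.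
have l0 : 0 < l by rewrite /l divr_gt0 // mulr_gt0.
have mA0 : map (vscale l) A != [::] by move: A0; rewrite -!size_eq0 size_map.
exists (map (vscale l) A), 1; split; first by split; [exact/eqP|rewrite ltr01 lexx].
rewrite !excludesE // !eA_scale // !mul1r; split.
  rewrite /l mulrAC ler_pdivrMr // -subr_ge0.
  rewrite (_ : _ - _ = c * (eA pi2 A - eA pi1 A)); last by ring.
  by apply: mulr_ge0; [exact: ltW | lra].
apply/negP; rewrite -ltNge /l mulrAC ltr_pdivlMr // -subr_gt0.
rewrite (_ : _ - _ = c * (eA pi2 A - eA pi1 A)); last by ring.
by apply: mulr_gt0; [exact: c0 | lra].
Qed.

End Firms.

Set Implicit Arguments. Unset Strict Implicit. Unset Printing Implicit Defensive.

Section Props.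
Variables (R : realType) (n : nat) (S : set (vec R n)).
Hypothesis mS : measurable S.
Hypothesis sS : S `<=` simplex (n:=n).
Local Notation vec := (vec R n).
Variable c : R.
Hypothesis c0 : 0 < c.
Variables pi1 pi2 : probability vec R.
Hypothesis pi1S : pi1 S = 1%E.
Hypothesis pi2S : pi2 S = 1%E.

Lemma exfirmE : (exists A alpha, is_firm A alpha /\
     excludes S c A alpha pi1 /\ ~ excludes S c A alpha pi2) <->
   ~ LE S pi2 pi1.
Proof.
rewrite (X1 mS sS c0 pi1S pi2S); split.
  by move=> [A [A0 lt]] H; have := H A A0; rewrite leNgt lt.
move=> nH; apply: contrapT => nE; apply: nH => A A0.
rewrite leNgt; apply/negP => lt; apply: nE; by exists A; split.
Qed.

Lemma firm_allE : (forall A alpha, is_firm A alpha ->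
     excludes S c A alpha pi2 -> excludes S c A alpha pi1) <-> LE S pi1 pi2.
Proof.
split.
  move=> H A A0; rewrite leNgt; apply/negP => lt.
  have : exists A alpha, is_firm A alpha /\
     excludes S c A alpha pi2 /\ ~ excludes S c A alpha pi1.
    by apply/(X1 mS sS c0 pi2S pi1S); exists A; split.
  move=> [A' [al [fA' [e2 ne1]]]]; apply: ne1; exact: H.
move=> H A al [/eqP A0 /andP[a0 a1]].
rewrite !(excludesE mS sS) // => e2.
apply: le_trans e2; apply: ler_wpM2l; [exact: ltW | exact: H].
Qed.

Lemma sysE : sys_disc S c pi1 pi2 <-> LE S pi1 pi2 /\ ~ LE S pi2 pi1.
Proof. by rewrite /sys_disc firm_allE exfirmE. Qed.

End Props.

Lemma unsysE (R : realType) (n : nat) (S : set (vec R n)) c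
  (pi1 pi2 : probability (vec R n) R) :
  measurable S -> S `<=` simplex (n:=n) -> 0 < c ->
  pi1 S = 1%E -> pi2 S = 1%E ->
  unsys_disc S c pi1 pi2 <-> ~ LE S pi2 pi1 /\ ~ LE S pi1 pi2.
Proof.
move=> mS sS c0 p1 p2.
by rewrite /unsys_disc (exfirmE mS sS c0 p1 p2) (exfirmE mS sS c0 p2 p1).
Qed.

Set Implicit Arguments. Unset Strict Implicit. Unset Printing Implicit Defensive.

Section FAprops.
Variables (R : realType) (n : nat).
Local Notation vec := (vec R n).

Lemma vA_comb (A : seq vec) t x y : A != [::] -> 0 <= t <= 1 ->
  vA A (comb t x y) <= t * vA A x + (1 - t) * vA A y.
Proof.
move=> A0 /andP[t0 t1]; apply: vA_le => // a aA; rewrite dotv_comb.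
apply: lerD; apply: ler_wpM2l; rewrite ?subr_ge0 //; exact: vA_ge.
Qed.

Lemma fA_convex (A : seq vec) : A != [::] -> convex_on_simplex (fA A).
Proof.
move=> A0 x y t sx sy t01; have /andP[t0 t1] := t01.
have := vA_comb x y A0 t01; rewrite /fA /comb => h.
have hx : vA A x <= Num.max (vA A x) 0 by rewrite le_max lexx.
have hy : vA A y <= Num.max (vA A y) 0 by rewrite le_max lexx.
have hx0 : 0 <= Num.max (vA A x) 0 by rewrite le_max lexx orbT.
have hy0 : 0 <= Num.max (vA A y) 0 by rewrite le_max lexx orbT.
rewrite ge_max; apply/andP; split.
  apply: le_trans h _; apply: lerD; apply: ler_wpM2l; rewrite ?subr_ge0 //.
by apply: addr_ge0; apply: mulr_ge0; rewrite ?subr_ge0.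
Qed.

Lemma dotv_lip (a x y : vec) d : (forall i, `|tnth y i - tnth x i| < d) ->
  `|dotv a y - dotv a x| <= nrm a * d.
Proof.
move=> H; rewrite /dotv -sumrB /nrm mulr_suml.
apply: le_trans (ler_norm_sum _ _ _) _; apply: ler_sum => i _.
by rewrite -mulrBr normrM ler_wpM2l // ltW.
Qed.

Lemma vA_lip1 (A : seq vec) x y d : A != [::] -> 0 <= d ->
  (forall i, `|tnth y i - tnth x i| < d) ->
  vA A y <= vA A x + bndA A * d.
Proof.
move=> A0 d0 H; have [a aA ->] := vA_ex y A0.
have := dotv_lip a H; rewrite ler_norml => /andP[_ h].
have h1 : nrm a <= bndA A by exact: (bigmax_seq_geF _ (fun a => nrm a)).
have h2 := vA_ge x aA.
have h3 : nrm a * d <= bndA A * d by exact: ler_wpM2r.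
lra.
Qed.

Lemma fA_cont (A : seq vec) : A != [::] -> continuous_on_simplex (fA A).
Proof.
move=> A0 x sx e e0.
have B0 : 0 <= bndA A by exact: bigmax_seq_ge.
exists (e / (bndA A + 1)); first by rewrite divr_gt0 // ltr_wpDl.
move=> y sy H.
have d0 : 0 <= e / (bndA A + 1) by rewrite ltW // divr_gt0 // ltr_wpDl.
have H' : forall i, `|tnth x i - tnth y i| < e / (bndA A + 1).
  by move=> i; rewrite distrC.
have h1 := vA_lip1 A0 d0 H; have h2 := vA_lip1 A0 d0 H'.
apply: le_lt_trans (max0_lip _ _) _.
have hB : bndA A * (e / (bndA A + 1)) < e.
  rewrite mulrA ltr_pdivrMr ?ltr_wpDl // mulrC ltr_pM2l //; lra.
rewrite ltr_norml; apply/andP; split; lra.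
Qed.

End FAprops.

Lemma Mrel_LE (R : realType) (n : nat) (S : set (vec R n))
  (pi1 pi2 : probability (vec R n) R) :
  measurable S -> S `<=` simplex (n:=n) ->
  pi1 S = 1%E -> pi2 S = 1%E -> Mrel S pi2 pi1 -> LE S pi1 pi2.
Proof.
move=> mS sS p1 p2 H A A0.
have := H (fA A) (fA_convex A0) (fA_cont A0).
by rewrite (E_fin mS p1 (good_fA sS A0)) (E_fin mS p2 (good_fA sS A0)) lee_fin.
Qed.

Lemma eqpop_LE (R : realType) (n : nat) (S : set (vec R n))
  (pi1 pi2 : probability (vec R n) R) :
  (forall A, measurable A -> pi1 A = pi2 A) -> LE S pi1 pi2.
Proof.
move=> H A A0; rewrite /eA /Ei (eq_measure_integral pi2) //.
by move=> B mB _; exact: H.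
Qed.

Set Implicit Arguments. Unset Strict Implicit. Unset Printing Implicit Defensive.

Lemma bigsetU_sub (T : Type) (m : nat) (F : 'I_m -> set T) (Y : set T) :
  (forall i, F i `<=` Y) -> \big[setU/set0]_(i < m) F i `<=` Y.
Proof.
move=> H; elim/big_ind: _ => //.
by move=> X Z hX hZ t [/hX|/hZ].
Qed.

Section Gen.
Variables (R : realType) (n : nat).
Local Notation vec := (vec R n).

Definition orth (L : seq ('I_n * R)) : set vec :=
  [set s | forall p, p \in L -> p.2 <= tnth s p.1].

Definition GV : set (set vec) := [set B | exists L, B = orth L].

Lemma orth_cat L1 L2 : orth L1 `&` orth L2 = orth (L1 ++ L2).
Proof.
apply/seteqP; split => s.
  by move=> [h1 h2] p; rewrite mem_cat => /orP[/h1|/h2].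
by move=> h; split => p pL; apply: h; rewrite mem_cat pL ?orbT.
Qed.

Lemma GV_setI : setI_closed GV.
Proof. by move=> A B [L1 ->] [L2 ->]; exists (L1 ++ L2); rewrite orth_cat. Qed.

Lemma orth_nil : orth [::] = setT.
Proof. by apply/seteqP; split => s // _ p. Qed.

Lemma measurable_orth L : measurable (orth L).
Proof.
elim: L => [|p L IH]; first by rewrite orth_nil.
have -> : orth (p :: L) = ((tnth (T:=R))^~ p.1 @^-1` `[p.2, +oo[) `&` orth L.
  apply/seteqP; split => s.
    move=> h; split; last by move=> q qL; apply: h; rewrite inE qL orbT.
    by rewrite /= in_itv /= andbT; apply: h; rewrite mem_head.
  move=> [/= h1 h2] q; rewrite inE => /orP[/eqP->|/h2//].
  by move: h1; rewrite in_itv /= andbT.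
apply: measurableI => //.
rewrite -[X in measurable X]setTI.
by apply: (measurable_tnth p.1) => //.
Qed.

Let RE : @measurable _ R = <<s @RGenCInfty.G R >>.
Proof. exact: RGenCInfty.measurableE. Qed.

Lemma GV_gen : @measurable _ vec = <<s GV >>.
Proof.
apply/seteqP; split; last first.
  apply: smallest_sub; first exact: sigma_algebra_measurable.
  by move=> B [L ->]; exact: measurable_orth.
have -> : @measurable _ vec =
  g_sigma_preimage (fun (i : 'I_n) (x : vec) => tnth x i) by [].
apply: smallest_sub; first exact: smallest_sigma_algebra.
apply: bigsetU_sub => i. rewrite RE -g_sigma_preimageE.
apply: smallest_sub; first exact: smallest_sigma_algebra.
move=> _ [A [x ->] <-]; apply: sub_sigma_algebra.
exists [:: (i, x)]; apply/seteqP; split => s.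
  by move=> [_ /=]; rewrite in_itv /= andbT => h p; rewrite inE => /eqP->.
by move=> h; split => //=; rewrite in_itv /= andbT; exact: (h (i, x) (mem_head _ _)).
Qed.

End Gen.

Set Implicit Arguments. Unset Strict Implicit. Unset Printing Implicit Defensive.

Section BigMaxGen.
Variables (R : realType) (T : eqType).

Lemma gbigmax_ge (x0 : R) (l : seq T) (F : T -> R) :
  x0 <= \big[Num.max/x0]_(a <- l) F a.
Proof.
elim: l => [|b l IH]; first by rewrite big_nil.
by rewrite big_cons le_max IH orbT.
Qed.

Lemma gbigmax_geF (x0 : R) (l : seq T) (F : T -> R) a :
  a \in l -> F a <= \big[Num.max/x0]_(a <- l) F a.
Proof.
elim: l => [//|b l IH]; rewrite inE big_cons le_max => /orP[/eqP->|al].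
  by rewrite lexx.
by rewrite IH // orbT.
Qed.

Lemma gbigmax_le (x0 M : R) (l : seq T) (F : T -> R) :
  x0 <= M -> (forall a, a \in l -> F a <= M) ->
  \big[Num.max/x0]_(a <- l) F a <= M.
Proof.
move=> x0M; elim: l => [|b l IH] H; first by rewrite big_nil.
rewrite big_cons ge_max H ?mem_head //= IH // => a al.
by apply: H; rewrite inE al orbT.
Qed.

Lemma maxD (a b c : R) : Num.max (a + c) (b + c) = Num.max a b + c.
Proof.
case: (leP a b) => h; first by rewrite maxrr // lerD2r.
by rewrite maxrl // lerD2r ltW.
Qed.

Lemma maxZ (a b k : R) : 0 <= k -> Num.max (k * a) (k * b) = k * Num.max a b.
Proof.
move=> k0; case: (leP a b) => h; first by rewrite maxrr // ler_wpM2l.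
by rewrite maxrl // ler_wpM2l // ltW.
Qed.

Lemma gbigmaxD (x0 c : R) (l : seq T) (F : T -> R) :
  \big[Num.max/x0 + c]_(a <- l) (F a + c) = \big[Num.max/x0]_(a <- l) F a + c.
Proof.
elim: l => [|b l IH]; first by rewrite !big_nil.
by rewrite !big_cons IH maxD.
Qed.

Lemma gbigmaxZ (k : R) (l : seq T) (F : T -> R) : 0 <= k ->
  \big[Num.max/0]_(a <- l) (k * F a) = k * \big[Num.max/0]_(a <- l) F a.
Proof.
move=> k0; elim: l => [|b l IH]; first by rewrite !big_nil mulr0.
by rewrite !big_cons IH maxZ.
Qed.

End BigMaxGen.

Section Approx.
Variables (R : realType) (n : nat) (S : set (vec R n)).
Hypothesis mS : measurable S.
Hypothesis sS : S `<=` simplex (n:=n).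
Local Notation vec := (vec R n).
Variable L : seq ('I_n * R).

Definition dvec (p : 'I_n * R) : vec := vadd (vscale p.2 (vone R n)) (vscale (-1) (ve R p.1)).

Lemma dotv_dvec p s : simplex s -> dotv (dvec p) s = p.2 - tnth s p.1.
Proof. by move=> ss; rewrite dotvD !dotvZ dotv_one // dotv_e mulr1 mulN1r. Qed.

Definition M1 (s : vec) : R := \big[Num.max/0]_(p <- L) (p.2 - tnth s p.1).

Definition Ak (K : R) : seq vec := vzero R n :: map (fun p => vscale K (dvec p)) L.
Definition Bk (K : R) : seq vec := vscale (-1) (vone R n) ::
  map (fun p => vadd (vscale K (dvec p)) (vscale (-1) (vone R n))) L.

Lemma Ak0 K : Ak K != [::]. Proof. by []. Qed.
Lemma Bk0 K : Bk K != [::]. Proof. by []. Qed.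

Lemma vA_Ak K s : 0 <= K -> simplex s -> vA (Ak K) s = K * M1 s.
Proof.
move=> K0 ss; rewrite /vA /Ak big_map dotv0 /M1 -gbigmaxZ //.
by apply: eq_bigr => p _; rewrite dotvZ dotv_dvec.
Qed.

Lemma vA_Bk K s : 0 <= K -> simplex s -> vA (Bk K) s = K * M1 s - 1.
Proof.
move=> K0 ss; rewrite /vA /Bk big_map dotvZ dotv_one // mulr1.
rewrite /M1 -gbigmaxZ // -gbigmaxD add0r.
by apply: eq_bigr => p _; rewrite dotvD !dotvZ dotv_dvec // dotv_one // mulr1.
Qed.

Lemma M1_ge0 s : 0 <= M1 s.
Proof. exact: gbigmax_ge. Qed.

Definition gk (K : R) (s : vec) : R := 1 - fA (Ak K) s + fA (Bk K) s.

Lemma gkE K s : 0 <= K -> simplex s -> gk K s = Num.max (1 - K * M1 s) 0.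
Proof.
move=> K0 ss; rewrite /gk /fA vA_Ak // vA_Bk //.
have h : 0 <= K * M1 s by apply: mulr_ge0 => //; exact: M1_ge0.
rewrite (maxrl h).
case: (leP (K * M1 s - 1) 0) => h1.
  by rewrite maxrl ?addr0 //; lra.
by rewrite maxrr; lra.
Qed.

Lemma good_gk K : good S (gk K).
Proof.
apply: goodD; last exact: (good_fA sS (Bk0 K)).
by apply: goodB; [exact: goodC | exact: (good_fA sS (Ak0 K))].
Qed.

Lemma M1_orth s : orth L s -> M1 s = 0.
Proof.
move=> h; apply/le_anti; rewrite M1_ge0 andbT.
by apply: gbigmax_le => // p /h; rewrite subr_le0.
Qed.

Lemma M1_northe s : ~ orth L s -> 0 < M1 s.
Proof.
move=> h; have [p pL lt] : exists2 p, p \in L & tnth s p.1 < p.2.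
  apply: contrapT => nE; apply: h => p pL; rewrite leNgt; apply/negP => lt.
  by apply: nE; exists p.
apply: lt_le_trans (gbigmax_geF 0 (fun p => p.2 - tnth s p.1) pL).
by rewrite subr_gt0.
Qed.

End Approx.

Set Implicit Arguments. Unset Strict Implicit. Unset Printing Implicit Defensive.

Section EqPop.
Variables (R : realType) (n : nat) (S : set (vec R n)).
Hypothesis mS : measurable S.
Hypothesis sS : S `<=` simplex (n:=n).
Local Notation vec := (vec R n).

Lemma full_meas (pi : probability vec R) (p : pi S = 1%E) B :
  measurable B -> pi B = pi (B `&` S).
Proof.
move=> mB; apply/le_anti/andP; split; last first.
  by apply: le_measure => //; rewrite ?inE //; exact: measurableI.
have h0 : pi (~` S) = 0%E by rewrite probability_setC // p subee.
apply: (@le_trans _ _ (pi (B `&` S `|` ~` S))).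
  apply: le_measure; rewrite ?inE //.
    by apply: measurableU; [exact: measurableI|exact: measurableC].
  by move=> s Bs; case: (pselect (S s)) => h; [left|right].
apply: le_trans (measureU2 _ _ _) _; first exact: measurableI.
  exact: measurableC.
rewrite -[leRHS]adde0; apply: leeD; first exact: lexx.
move/eqP: h0 => h0; rewrite le_eqVlt; apply/orP; left; exact: h0.
Qed.

Variable L : seq ('I_n * R).

Lemma lim_gk (pi : probability vec R) (p : pi S = 1%E) :
  (\int[pi]_(s in S) (gk L k%:R s)%:E)%E @[k --> \oo] --> pi (orth L `&` S).
Proof.
rewrite -integral_indic //; last exact: measurable_orth.
apply: (@dominated_cvg _ _ _ pi S mS (fun k s => (gk L k%:R s)%:E)
   (fun s => (\1_(orth L) s)%:E) (cst 1%:E)).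
- by move=> k; apply/measurable_EFinP; exact: (good_gk sS L k%:R).1.
- move=> s Ss; apply: cvg_near_cst.
  case: (pselect (orth L s)) => h.
    near=> k; rewrite indicE mem_set // gkE //; last exact: sS.
    by rewrite M1_orth // mulr0 subr0 maxrl // ler01.
  have M0 := M1_northe h.
  rewrite indicE memNset //.
  apply: filterS (nbhs_infty_gtr (M1 L s)^-1) => k hk.
  rewrite gkE //; last exact: sS.
  rewrite maxrr //; rewrite subr_le0.
  by rewrite -(ltr_pM2r M0) mulVf ?gt_eqF // in hk; exact: ltW.
- by [].
- exact: (good_int mS p (goodC S 1)).
- move=> k s Ss /=; rewrite gkE //; last exact: sS.
  have h : 0 <= k%:R * M1 L s by apply: mulr_ge0 => //; exact: M1_ge0.
  rewrite lee_fin ger0_norm ?le_max ?lexx ?orbT //.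
  rewrite ge_max ler01 andbT; lra.
Unshelve. all: by end_near.
Qed.

Variables pi1 pi2 : probability vec R.
Hypothesis p1 : pi1 S = 1%E.
Hypothesis p2 : pi2 S = 1%E.
Hypothesis hEq : forall A, A != [::] -> eA S pi1 A = eA S pi2 A.

Lemma Ei_gk_eq K : Ei S pi1 (gk L K) = Ei S pi2 (gk L K).
Proof.
have gA := good_fA sS (Ak0 L K); have gB := good_fA sS (Bk0 L K).
rewrite /gk.
rewrite (EiD mS p1 (f := fun s => 1 - fA (Ak L K) s)); last 2 first.
  by apply: goodB => //; exact: goodC.
  by [].
rewrite (EiD mS p2 (f := fun s => 1 - fA (Ak L K) s)); last 2 first.
  by apply: goodB => //; exact: goodC.
  by [].
rewrite (EiB mS p1 (goodC S 1) gA) (EiB mS p2 (goodC S 1) gA).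
rewrite (EiC mS p1) (EiC mS p2).
by have := hEq (Ak0 L K); have := hEq (Bk0 L K); rewrite /eA => -> ->.
Qed.

Lemma orth_eq : pi1 (orth L) = pi2 (orth L).
Proof.
rewrite (full_meas p1 (measurable_orth L)) (full_meas p2 (measurable_orth L)).
have c1 := lim_gk p1; have c2 := lim_gk p2.
have E : (fun k : nat => \int[pi1]_(s in S) (gk L k%:R s)%:E)%E =
         (fun k : nat => \int[pi2]_(s in S) (gk L k%:R s)%:E)%E.
  apply: funext => k.
  by rewrite (E_fin mS p1 (good_gk sS L _)) (E_fin mS p2 (good_gk sS L _)) Ei_gk_eq.
rewrite E in c1.
exact: (cvg_unique _ c1 c2).
Qed.

End EqPop.

Lemma LE_eqpop (R : realType) (n : nat) (S : set (vec R n))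
  (pi1 pi2 : probability (vec R n) R) :
  measurable S -> S `<=` simplex (n:=n) ->
  pi1 S = 1%E -> pi2 S = 1%E -> LE S pi1 pi2 -> LE S pi2 pi1 ->
  forall A, measurable A -> pi1 A = pi2 A.
Proof.
move=> mS sS p1 p2 h12 h21.
have hEq : forall A, A != [::] -> eA S pi1 A = eA S pi2 A.
  by move=> A A0; apply/le_anti; rewrite h12 // h21.
apply: (measure_unique (@GV R n) (fun _ => setT)).
- exact: GV_gen.
- exact: GV_setI.
- by move=> _; exists [::]; rewrite orth_nil.
- by apply/seteqP; split => // x _; exists 0%N.
- by move=> A [L ->]; exact: (orth_eq mS sS L p1 p2 hEq).
- move=> _; have : (pi1 setT < +oo)%E by rewrite probability_setT ltry.
  exact.
Qed.

Set Implicit Arguments. Unset Strict Implicit. Unset Printing Implicit Defensive.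
Import numFieldNormedType.Exports.

Section Topo.
Variables (R : realType) (n : nat).
Local Notation vec := (vec R n).

Definition rowv (x : vec) : 'rV[R]_n := \row_i tnth x i.
Definition tup (v : 'rV[R]_n) : vec := [tuple v ord0 i | i < n].

Lemma tupK x : tup (rowv x) = x.
Proof. by apply: eq_from_tnth => i; rewrite tnth_mktuple mxE. Qed.

Lemma rowvK v : rowv (tup v) = v.
Proof. by apply/rowP => i; rewrite mxE tnth_mktuple. Qed.

Lemma tnth_tup v i : tnth (tup v) i = v ord0 i.
Proof. by rewrite tnth_mktuple. Qed.

Definition Dr : set 'rV[R]_n := [set v | simplex (tup v)].

Lemma ball_coord (v w : 'rV[R]_n) d : ball v d w -> forall i, `|v ord0 i - w ord0 i| < d.
Proof.
rewrite -ball_normE /ball_ /= => h i; apply: le_lt_trans h.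
have -> : `|v - w| = mx_norm (v - w) by [].
rewrite mx_normrE.
apply: le_trans (le_bigmax _ _ (ord0, i)); by rewrite /= !mxE.
Qed.

Lemma within_of_simplex (h : vec -> R) : continuous_on_simplex h ->
  {within Dr, continuous (h \o tup)}.
Proof.
move=> hc; apply/subspace_continuousP => v Dv.
apply/cvgrPdist_lt => e e0.
rewrite near_withinE.
have [d d0 H] := hc (tup v) Dv e e0.
apply/nbhs_ballP; exists d => // w bw Dw.
rewrite distrC; apply: H => // i.
rewrite !tnth_tup distrC; exact: ball_coord bw i.
Qed.

Lemma cont_sum (T : topologicalType) (I : Type) (l : seq I) (F : I -> T -> R) :
  (forall i, continuous (F i)) -> continuous (fun x => \sum_(i <- l) F i x).
Proof.
move=> H; elim: l => [|b l IH].
  rewrite (_ : (fun x => _) = fun=> 0); first exact: cst_continuous.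
  by apply: funext => x; rewrite big_nil.
rewrite (_ : (fun x => _) = F b + (fun x => \sum_(i <- l) F i x)).
  by move=> x; apply: continuousD; [exact: H | exact: IH].
by apply: funext => x; rewrite big_cons.
Qed.

Lemma Dr_compact : compact Dr.
Proof.
apply: bounded_closed_compact.
  exists 1; split; first exact: num_real.
  move=> M M1 v Dv /=.
  have -> : `|v| = mx_norm v by [].
  rewrite mx_normrE; apply: bigmax_le; first by apply: ltW; apply: lt_trans M1.
  move=> [i j] _ /=; rewrite (ord1 i).
  have := simplex_le1 j Dv; rewrite tnth_tup => /andP[h0 h1].
  by rewrite ger0_norm //; apply: le_trans h1 (ltW M1).
have -> : Dr = \bigcap_(i in [set: 'I_n]) ((fun v : 'rV[R]_n => v ord0 i) @^-1` [set x | 0 <= x])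
   `&` ((fun v : 'rV[R]_n => \sum_(i < n) v ord0 i) @^-1` [set x | x = 1]).
  apply/seteqP; split => v.
    move=> [h0 h1]; split.
      by move=> i _ /=; have := h0 i; rewrite tnth_tup.
    by rewrite /= -h1; apply: eq_bigr => i _; rewrite tnth_tup.
  move=> [h0 h1]; split.
    by move=> i; rewrite tnth_tup; exact: h0.
  by rewrite -h1 /=; apply: eq_bigr => i _; rewrite tnth_tup.
apply: closedI.
  apply: closed_bigI => i _; apply: preimage_closed; last exact: closed_ge.
  by move=> x _; exact: coord_continuous.
apply: preimage_closed; last exact: closed_eq.
move=> x _.
have := @cont_sum _ _ (index_enum 'I_n) (fun i (v : 'rV[R]_n) => v ord0 i)
  (fun i => @coord_continuous _ _ _ ord0 i).
by move/(_ x).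
Qed.

End Topo.

Set Implicit Arguments. Unset Strict Implicit. Unset Printing Implicit Defensive.

Lemma small_lambda (R : realType) (P Q : R) : 0 <= Q ->
  (forall l, 0 < l -> l <= 1 -> 0 <= l ^+ 2 * Q + 2 * l * P) -> 0 <= P.
Proof.
move=> Q0 H; rewrite leNgt; apply/negP => P0.
pose l := Num.min 1 (- P / (Q + 1)).
have Q1 : 0 < Q + 1 by lra.
have l0 : 0 < l by rewrite lt_min ltr01 /= divr_gt0 // oppr_gt0.
have l1 : l <= 1 by rewrite ge_min lexx.
have l2 : l <= - P / (Q + 1) by rewrite ge_min lexx orbT.
have lQ : l * (Q + 1) <= - P by rewrite -ler_pdivlMr.
have := H l l0 l1.
have -> : l ^+ 2 * Q + 2 * l * P = l * (l * Q + 2 * P) by rewrite expr2; ring.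
rewrite pmulr_rge0 //; nra.
Qed.

Lemma sq_le_max (R : realType) (a z : R) : 0 <= a -> a <= Num.max z 0 ->
  a ^+ 2 <= z ^+ 2.
Proof.
move=> a0; case: (leP z 0) => hz az.
  have -> : a = 0 by lra.
  by rewrite expr2 mul0r sqr_ge0.
by rewrite expr2 [leRHS]expr2; nra.
Qed.

Lemma sum3 (R : realType) (n : nat) (a b : R) (F G H : 'I_n -> R) :
  \sum_(i < n) (a * F i + b * G i + H i) =
  a * \sum_(i < n) F i + b * \sum_(i < n) G i + \sum_(i < n) H i.
Proof. by rewrite !big_split /= -!mulr_sumr. Qed.

Section Sep.
Variables (R : realType) (n : nat).
Local Notation vec := (vec R n).
Variables (h : vec -> R) (hconv : convex_on_simplex h).
Variables (x0 : vec) (t0 : R).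
Hypothesis ht0 : t0 < h x0.

Definition psi (y : vec) := \sum_(i < n) (tnth y i - tnth x0 i) ^+ 2 +
  (Num.max (h y - t0) 0) ^+ 2.

Variable ys : vec.
Hypothesis sys : simplex ys.
Hypothesis ysmin : forall y, simplex y -> psi ys <= psi y.

Let w := Num.max (h ys - t0) 0.
Let ts := t0 + w.
Let u : vec := [tuple tnth x0 i - tnth ys i | i < n].

Lemma w_ge0 : 0 <= w. Proof. by rewrite /w le_max lexx orbT. Qed.
Lemma hys_le : h ys <= ts. Proof. rewrite /ts /w; have := le_max (h ys - t0) (h ys - t0) 0; rewrite lexx /= => /esym h1; lra. Qed.

Lemma dotv_u_diff x :
  dotv u x - dotv u ys = \sum_(i < n) (tnth u i * (tnth x i - tnth ys i)).
Proof. by rewrite /dotv -sumrB; apply: eq_bigr => i _; rewrite mulrBr. Qed.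

Lemma var_ineq x : simplex x -> dotv u x - dotv u ys <= w * (h x - ts).
Proof.
move=> sx.
set Q := \sum_(i < n) (tnth x i - tnth ys i) ^+ 2 + (h x - ts) ^+ 2.
have Q0 : 0 <= Q.
  by apply: addr_ge0; [apply: sumr_ge0 => i _; exact: sqr_ge0 | exact: sqr_ge0].
suff : 0 <= w * (h x - ts) - (dotv u x - dotv u ys) by lra.
apply: (small_lambda Q0) => l l0 l1.
have l01 : 0 <= l <= 1 by rewrite ltW.
have sy' := simplex_comb sx sys l01.
have := ysmin sy'; rewrite /psi.
set y' := comb l x ys.
have hy' : h y' <= l * h x + (1 - l) * h ys by exact: hconv.
have hy2 : h y' - t0 <= w + l * (h x - ts).
  have := hys_le; rewrite /ts => hh.
  have : (1 - l) * h ys <= (1 - l) * ts by apply: ler_wpM2l; [lra | exact: hys_le].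
  rewrite /ts; lra.
have hm : (Num.max (h y' - t0) 0) ^+ 2 <= (w + l * (h x - ts)) ^+ 2.
  apply: sq_le_max; first by rewrite le_max lexx orbT.
  by rewrite ge_max; apply/andP; split; rewrite le_max ?lexx ?orbT ?hy2.
have hsum : \sum_(i < n) (tnth y' i - tnth x0 i) ^+ 2 =
    l ^+ 2 * \sum_(i < n) (tnth x i - tnth ys i) ^+ 2
    + (-2 * l) * \sum_(i < n) (tnth u i * (tnth x i - tnth ys i))
    + \sum_(i < n) (tnth u i) ^+ 2.
  rewrite -sum3; apply: eq_bigr => i _; rewrite /y' /u !tnth_mktuple; ring.
have hys : \sum_(i < n) (tnth ys i - tnth x0 i) ^+ 2 = \sum_(i < n) (tnth u i) ^+ 2.
  by apply: eq_bigr => i _; rewrite tnth_mktuple -sqrrN opprB.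
rewrite hsum hys -/w dotv_u_diff => H.
rewrite /Q -dotv_u_diff.
have e1 : (w + l * (h x - ts)) ^+ 2 = w ^+ 2 + 2 * l * w * (h x - ts) + l ^+ 2 * (h x - ts) ^+ 2.
  by rewrite !expr2; ring.
rewrite e1 in hm.
rewrite -dotv_u_diff in H.
nra.
Qed.

Hypothesis sx0 : simplex x0.

Lemma w_pos : 0 < w.
Proof.
have H := var_ineq sx0; rewrite dotv_u_diff in H.
have su : \sum_(i < n) tnth u i * (tnth x0 i - tnth ys i) =
          \sum_(i < n) (tnth u i) ^+ 2.
  by apply: eq_bigr => i _; rewrite /u !tnth_mktuple expr2.
rewrite su in H.
rewrite lt_neqAle w_ge0 andbT; apply/eqP => w0.
move: H; rewrite -w0 mul0r => Hs.
have u0 : forall i, tnth u i = 0.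
  move=> i; apply/eqP; rewrite -sqrf_eq0; apply/eqP/le_anti.
  rewrite sqr_ge0 andbT; apply: le_trans Hs.
  rewrite (bigD1 i) //= lerDl; apply: sumr_ge0 => j _; exact: sqr_ge0.
have ysx0 : ys = x0.
  apply: eq_from_tnth => i; have := u0 i; rewrite /u tnth_mktuple.
  by move/eqP; rewrite subr_eq0 => /eqP->.
move: w0; rewrite /w ysx0 maxrl; have := ht0; lra.
Qed.

Lemma sep_exists : exists (a : vec) (b : R),
  (forall x, simplex x -> dotv a x + b <= h x) /\ t0 < dotv a x0 + b.
Proof.
have wp := w_pos.
exists (vscale w^-1 u), (ts - w^-1 * dotv u ys).
have E x : dotv (vscale w^-1 u) x + (ts - w^-1 * dotv u ys) =
           (dotv u x - dotv u ys) / w + ts.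
  by rewrite dotvZ; field; rewrite gt_eqF.
split.
  move=> x sx; rewrite E.
  have := var_ineq sx; rewrite -(ler_pdivrMl _ _ wp) mulrC => h1.
  lra.
rewrite E.
have : 0 <= (dotv u x0 - dotv u ys) / w.
  apply: divr_ge0; last exact: ltW.
  rewrite dotv_u_diff; apply: sumr_ge0 => i _.
  by rewrite /u !tnth_mktuple -expr2 sqr_ge0.
rewrite /ts; lra.
Qed.

End Sep.

Set Implicit Arguments. Unset Strict Implicit. Unset Printing Implicit Defensive.
Import numFieldNormedType.Exports.

Lemma sqmax_cont (R : realType) (t0 : R) :
  continuous (fun y : R => (Num.max (y - t0) 0) ^+ 2).
Proof.
move=> y.
have hm : {for y, continuous (fun y : R => Num.max (y - t0) 0)}.
  apply: (@continuous_max R R (fun y => y - t0) (fun=> 0)).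
    by apply: continuousB; [exact: cvg_id | exact: cst_continuous].
  exact: cst_continuous.
rewrite (_ : (fun y => _) = (fun y : R => Num.max (y - t0) 0) \* (fun y : R => Num.max (y - t0) 0)).
  exact: continuousM.
by apply: funext => z; rewrite expr2.
Qed.

Section SepEVT.
Variables (R : realType) (n : nat).
Local Notation vec := (vec R n).
Variables (h : vec -> R) (hconv : convex_on_simplex h) (hcont : continuous_on_simplex h).

Lemma separation (x0 : vec) eps : simplex x0 -> 0 < eps ->
  exists (a : vec) (b : R),
  (forall x, simplex x -> dotv a x + b <= h x) /\ h x0 - eps < dotv a x0 + b.
Proof.
move=> sx0 e0.
set t0 := h x0 - eps.
have ht0 : t0 < h x0 by rewrite /t0; lra.
pose f : 'rV[R]_n -> R := fun v => psi h x0 t0 (tup v).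
have fE : f = (fun v : 'rV[R]_n => \sum_(i < n) (v ord0 i - tnth x0 i) ^+ 2) +
              ((fun y => (Num.max (y - t0) 0) ^+ 2) \o (h \o (@tup R n))).
  apply: funext => v; rewrite /f /psi /=; congr (_ + _).
  by apply: eq_bigr => i _; rewrite tnth_tup.
have fc : {within @Dr R n, continuous f}.
  rewrite fE => x; apply: continuousD.
    apply: (continuous_subspaceT (A := @Dr R n)).
    apply: (@cont_sum R _ _ (index_enum 'I_n) (fun i (v : 'rV[R]_n) => (v ord0 i - tnth x0 i) ^+ 2)) => i.
    move=> v; rewrite (_ : (fun _ => _) = (fun v : 'rV[R]_n => v ord0 i - tnth x0 i) \*
                           (fun v : 'rV[R]_n => v ord0 i - tnth x0 i)).
      have hb : {for v, continuous (fun v : 'rV[R]_n => v ord0 i - tnth x0 i)}.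
        by apply: continuousB; [exact: coord_continuous | exact: cst_continuous].
      exact: (continuousM hb hb).
    by apply: funext => z; rewrite expr2.
  apply: (@within_continuous_comp _ _ _ (@Dr R n) (h \o (@tup R n))).
    by move=> y _; exact: sqmax_cont.
  exact: within_of_simplex.
have Dne : @Dr R n !=set0 by exists (rowv x0); rewrite /Dr /= tupK.
have [c Dc cmin] := EVT_min_rV Dne (@Dr_compact R n) fc.
have sys : simplex (tup c) by move: Dc; rewrite inE.
have ysmin : forall y, simplex y -> psi h x0 t0 (tup c) <= psi h x0 t0 y.
  move=> y sy; have := cmin (rowv y); rewrite /f tupK; apply.
  by rewrite inE /Dr /= tupK.
exact: (sep_exists hconv ht0 sys ysmin sx0).
Qed.

End SepEVT.

Set Implicit Arguments. Unset Strict Implicit. Unset Printing Implicit Defensive.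
Import numFieldNormedType.Exports.

Section Approx2.
Variables (R : realType) (n : nat).
Local Notation vec := (vec R n).
Variables (h : vec -> R) (hconv : convex_on_simplex h) (hcont : continuous_on_simplex h).

Lemma local_sep (x0 : vec) eps : simplex x0 -> 0 < eps ->
  exists p : vec * R * R, 0 < p.2 /\
   (forall x, simplex x -> dotv p.1.1 x + p.1.2 <= h x) /\
   (forall x, simplex x -> (forall i, `|tnth x i - tnth x0 i| < p.2) ->
      h x - eps < dotv p.1.1 x + p.1.2).
Proof.
move=> sx0 e0.
have e2 : 0 < eps / 2 by rewrite divr_gt0.
have e4 : 0 < eps / 4 by rewrite divr_gt0.
have [a [b [hl hx0]]] := separation hconv hcont sx0 e2.
have [d1 d10 hd1] := hcont sx0 e4.
have na0 : 0 <= nrm a by apply: sumr_ge0 => i _.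
set d2 := eps / 4 / (nrm a + 1).
have d20 : 0 < d2 by rewrite divr_gt0 // ltr_wpDl.
exists (a, b, Num.min d1 d2); split; first by rewrite lt_min d10.
split; first exact: hl.
move=> x sx hx /=.
have hxd1 : forall i, `|tnth x i - tnth x0 i| < d1.
  by move=> i; apply: lt_le_trans (hx i) _; rewrite ge_min lexx.
have hxd2 : forall i, `|tnth x i - tnth x0 i| < d2.
  by move=> i; apply: lt_le_trans (hx i) _; rewrite ge_min lexx orbT.
have := hd1 x sx hxd1; rewrite ltr_norml => /andP[_ h1].
have := dotv_lip a hxd2; rewrite ler_norml => /andP[h2 _].
have h3 : nrm a * d2 <= eps / 4.
  rewrite /d2 mulrA ler_pdivrMr ?ltr_wpDl //.
  rewrite [X in X <= _]mulrC; apply: ler_wpM2l; [exact: ltW | lra].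
lra.
Qed.

Hypothesis n0 : (0 < n)%N.

Lemma approx eps : 0 < eps -> exists A : seq vec, A != [::] /\
  forall x, simplex x -> vA A x <= h x /\ h x <= vA A x + eps.
Proof.
move=> e0.
have [F HF] : {F : 'rV[R]_n -> vec * R * R & forall v, @Dr R n v -> 0 < (F v).2 /\
   (forall x, simplex x -> dotv (F v).1.1 x + (F v).1.2 <= h x) /\
   (forall x, simplex x -> (forall i, `|tnth x i - tnth (tup v) i| < (F v).2) ->
      h x - eps < dotv (F v).1.1 x + (F v).1.2)}.
  apply: (@choice _ _ (fun v p => @Dr R n v -> 0 < p.2 /\
   (forall x, simplex x -> dotv p.1.1 x + p.1.2 <= h x) /\
   (forall x, simplex x -> (forall i, `|tnth x i - tnth (tup v) i| < p.2) ->
      h x - eps < dotv p.1.1 x + p.1.2))) => v.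
  case: (pselect (@Dr R n v)) => Dv.
    have [p Hp] := local_sep Dv e0; by exists p.
  by exists (vzero R n, 0, 1).
have cc := @Dr_compact R n; rewrite compact_cover in cc.
have cov : @Dr R n `<=` cover (@Dr R n) (fun v => ball v (F v).2).
  move=> v Dv; exists v => //; apply: ballxx; exact: (proj1 (HF v Dv)).
have [D' D'sub D'cov] := cc _ (@Dr R n) (fun v => ball v (F v).2)
  (fun v _ => ball_open v _) cov.
pose A := [seq vadd (F v).1.1 (vscale (F v).1.2 (vone R n)) | v <- finmap.enum_fset D'].
have ell v x : simplex x -> dotv (vadd (F v).1.1 (vscale (F v).1.2 (vone R n))) x =
   dotv (F v).1.1 x + (F v).1.2.
  by move=> sx; rewrite dotvD dotvZ dotv_one // mulr1.
have key (x : vec) : simplex x -> exists2 v : 'rV[R]_n, v \in finmap.enum_fset D' & h x - eps < dotv (F v).1.1 x + (F v).1.2.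
  move=> sx; have Dx : @Dr R n (rowv x) by rewrite /Dr /= tupK.
  have [v /= vD bv] := D'cov _ Dx.
  exists v => //; have Dv := D'sub _ vD; rewrite inE in Dv.
  have [_ [_ H3]] := HF v Dv; apply: H3 => // i.
  by have := ball_coord bv i; rewrite tnth_tup distrC mxE.
have [xs sxs] : exists x : vec, simplex x.
  exists (ve R (Ordinal n0)); split.
    by move=> i; rewrite tnth_mktuple ler0n.
  rewrite (bigD1 (Ordinal n0)) //= tnth_mktuple eqxx big1 ?addr0 // => i /negbTE H.
  by rewrite tnth_mktuple H.
exists A; split.
  have [v vD _] := key xs sxs.
  by rewrite /A; case: (finmap.enum_fset D') vD => // _ _; rewrite ?finmap.in_fset.
move=> x sx; split.
  apply: vA_le; first by have [v vD _] := key xs sxs; rewrite /A; case: (finmap.enum_fset D') vD.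
  move=> a /mapP [v vD ->]; rewrite ell //.
  have Dv := D'sub _ vD; rewrite inE in Dv.
  by have [_ [H2 _]] := HF v Dv; exact: H2.
have [v vD hv] := key x sx.
have : dotv (vadd (F v).1.1 (vscale (F v).1.2 (vone R n))) x <= vA A x.
  by apply: vA_ge; apply/mapP; exists v.
rewrite ell //; lra.
Qed.

End Approx2.

Set Implicit Arguments. Unset Strict Implicit. Unset Printing Implicit Defensive.
Import numFieldNormedType.Exports.

Section LEMrel.
Variables (R : realType) (n : nat) (S : set (vec R n)).
Hypothesis n0 : (0 < n)%N.
Hypothesis mS : measurable S.
Hypothesis sS : S `<=` simplex (n:=n).
Local Notation vec := (vec R n).
Variables pi1 pi2 : probability vec R.
Hypothesis p1 : pi1 S = 1%E.
Hypothesis p2 : pi2 S = 1%E.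
Hypothesis h12 : LE S pi1 pi2.

Lemma vA_shift (A : seq vec) K s : A != [::] -> simplex s ->
  vA (map (vadd (vscale K (vone R n))) A) s = vA A s + K.
Proof.
move=> A0 ss; have mA0 : map (vadd (vscale K (vone R n))) A != [::].
  by move: A0; rewrite -!size_eq0 size_map.
have E a : dotv (vadd (vscale K (vone R n)) a) s = dotv a s + K.
  by rewrite dotvD dotvZ dotv_one // mulr1 addrC.
apply/le_anti/andP; split.
  apply: vA_le => // b /mapP[a aA ->]; rewrite E lerD2r; exact: vA_ge.
have [a aA ->] := vA_ex s A0; rewrite -E; apply: vA_ge.
by apply/mapP; exists a.
Qed.

Lemma Ei_vA_le (A : seq vec) : A != [::] ->
  Ei S pi1 (vA A) <= Ei S pi2 (vA A).
Proof.
move=> A0; set K := bndA A.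
set A' := map (vadd (vscale K (vone R n))) A.
have A'0 : A' != [::] by move: A0; rewrite -!size_eq0 size_map.
have E (mu : probability vec R) : mu S = 1%E -> Ei S mu (vA A) = eA S mu A' - K.
  move=> pS; rewrite /eA -(EiC mS pS K) -(EiB mS pS); last exact: goodC.
    apply: Ei_ext => s Ss; rewrite /fA /A' vA_shift //; last exact: sS.
    have := vA_bound A0 (sS Ss); rewrite ler_norml -/K => /andP[hb _].
    by rewrite maxrl; [ring | lra].
  exact: good_fA.
rewrite (E _ p1) (E _ p2) lerD2r; exact: h12.
Qed.

Variables (h : vec -> R) (hconv : convex_on_simplex h) (hcont : continuous_on_simplex h).

Lemma good_h : good S h.
Proof.
have [As HAs] : {As : nat -> seq vec & forall k, As k != [::] /\ forall x, simplex x ->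
    vA (As k) x <= h x /\ h x <= vA (As k) x + k.+1%:R^-1}.
  apply: (@choice _ _ (fun k A => A != [::] /\ forall x, simplex x ->
    vA A x <= h x /\ h x <= vA A x + k.+1%:R^-1)) => k.
  have e0 : 0 < k.+1%:R^-1 :> R by rewrite invr_gt0 ltr0Sn.
  have [A [A0 HA]] := approx hconv hcont n0 e0.
  by exists A.
split.
  apply: (@measurable_fun_cvg _ _ _ _ (fun k => vA (As k))).
    by move=> k; exact: measurable_vA.
  move=> x Sx; apply/cvgrPdist_lt => e e0.
  apply: filterS (nbhs_infty_gtr e^-1) => k hk.
  have [_ HA] := HAs k; have [l1 l2] := HA x (sS Sx).
  have hk1 : 1 < e * k.+1%:R.
    have ie0 : 0 < e^-1 by rewrite invr_gt0.
    rewrite -(ltr_pM2l ie0) mulr1 mulrA mulVf ?gt_eqF // mul1r.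
    by apply: lt_le_trans hk _; rewrite ler_nat.
  have hk2 : k.+1%:R^-1 < e :> R.
    by rewrite -[X in X < _]mul1r ltr_pdivrMr ?ltr0Sn // mulrC.
  move: l2 hk2; set t := (k.+1%:R^-1 : R) => l2 hk2.
  rewrite ger0_norm; [lra | lra].
have [A0 HA] := HAs 0%N.
exists (bndA (As 0%N) + 1) => x Sx.
have [l1 l2] := HA x (sS Sx).
have := vA_bound A0 (sS Sx); rewrite ler_norml => /andP[b1 b2].
have : (0%N.+1%:R^-1 : R) = 1 by rewrite invr1.
move=> e1; rewrite e1 in l2.
rewrite ler_norml; apply/andP; split; lra.
Qed.

Lemma Mrel_goal :
  (\int[pi1]_(s in S) (h s)%:E <= \int[pi2]_(s in S) (h s)%:E)%E.
Proof.
have gh := good_h.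
rewrite (E_fin mS p1 gh) (E_fin mS p2 gh) lee_fin.
apply/ler_addgt0Pr => e e0.
have [A [A0 HA]] := approx hconv hcont n0 e0.
have gA := good_vA sS A0.
have g1 : Ei S pi1 h <= Ei S pi1 (vA A) + e.
  rewrite -(EiC mS p1 e) -(EiD mS p1 gA (goodC S e)).
  apply: (Ei_le mS p1) => //; first exact: goodD gA (goodC S e).
  by move=> s Ss; have [_ ->] := HA s (sS Ss).
have g2 : Ei S pi2 (vA A) <= Ei S pi2 h.
  apply: (Ei_le mS p2) => // s Ss; by have [-> _] := HA s (sS Ss).
have g3 := Ei_vA_le A0.
lra.
Qed.

End LEMrel.

Lemma LE_Mrel (R : realType) (n : nat) (S : set (vec R n))
  (pi1 pi2 : probability (vec R n) R) :
  (0 < n)%N -> measurable S -> S `<=` simplex (n:=n) ->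
  pi1 S = 1%E -> pi2 S = 1%E -> LE S pi1 pi2 -> Mrel S pi2 pi1.
Proof.
move=> n0 mS sS p1 p2 h12 h hconv hcont.
exact: (Mrel_goal n0 mS sS p1 p2 h12 hconv hcont).
Qed.

Theorem proposition1 (R : realType) (n : nat) (S : set (vec R n)) (c : R)
  (pi pi' : probability (vec R n) R) :
  (0 < n)%N ->
  measurable S -> S `<=` simplex (n:=n) ->
  0 < c ->
  pi S = 1%E -> pi' S = 1%E ->
  (forall i, skill S pi i = skill S pi' i) ->
  let eqpop := forall A, measurable A -> pi A = pi' A in
  (sys_disc S c pi pi' <-> Mrel S pi' pi /\ ~ eqpop) /\
  (unsys_disc S c pi pi' <-> ~ Mrel S pi pi' /\ ~ Mrel S pi' pi) /\
  (no_disc S c pi pi' <-> eqpop).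
Proof.
move=> n0 mS sS c0 p1 p2 _ eqpop.
have M1 : Mrel S pi' pi <-> LE S pi pi'.
  by split; [exact: Mrel_LE | exact: LE_Mrel].
have M2 : Mrel S pi pi' <-> LE S pi' pi.
  by split; [exact: Mrel_LE | exact: LE_Mrel].
have EQ : eqpop <-> LE S pi pi' /\ LE S pi' pi.
  split; first by move=> H; split; apply: eqpop_LE => A mA; rewrite H.
  by move=> [h1 h2]; exact: (LE_eqpop mS sS p1 p2 h1 h2).
have S1 := sysE mS sS c0 p1 p2.
have S2 := sysE mS sS c0 p2 p1.
have U := unsysE mS sS c0 p1 p2.
rewrite /no_disc S1 S2 U M1 M2 EQ.
have [L1|L1] := pselect (LE S pi pi'); have [L2|L2] := pselect (LE S pi' pi);
  tauto.
Qed.
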